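(* Let $G_0$ be one of $\mathrm{SL}(2,\mathbb R)$, $\mathrm{SL}(2,\mathbb C)$, or $\mathrm{SO}_e(n,1)$ with $n\ge2$, with Lie algebra $\mathfrak g_0$. Let $\mathfrak g=\mathfrak g_0\times\mathfrak g_0\times\mathfrak g_0$ and $\mathfrak h=\{(X,X,X):X\in\mathfrak g_0\}$. Let $\mathfrak p=\mathfrak p_1\times\mathfrak p_2\times\mathfrak p_3$ be a minimal parabolic subalgebra of $\mathfrak g$, where each $\mathfrak p_j$ is a minimal parabolic subalgebra of $\mathfrak g_0$. Then $\mathfrak g=\mathfrak p+\mathfrak h$ if and only if $\mathfrak p_1,\mathfrak p_2,\mathfrak p_3$ are pairwise distinct. In particular, there exists a minimal parabolic subalgebra $\mathfrak p$ of $\mathfrak g$ with $\mathfrak g=\mathfrak p+\mathfrak h$. *)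

(* Defs.v *)
From HB Require Import structures.
From mathcomp Require Import all_boot all_order all_algebra.
From mathcomp Require Import complex.
From mathcomp Require Import reals.
Set Implicit Arguments. Unset Strict Implicit. Unset Printing Implicit Defensive.
Import Order.TTheory GRing.Theory Num.Theory.
Local Open Scope ring_scope.

Section Generic.
Variables (F : fieldType) (k : nat).
Notation M := 'M[F]_k.

Definition same_set (S T : M -> Prop) : Prop := forall X, S X <-> T X.

(* p is a minimal parabolic subalgebra of g0: an Ad(G0)-conjugate
   g pstd g^-1 (g in G0) of the standard minimal parabolic pstd. *)
Definition minpar (G0 : M -> Prop) (pstd : M -> Prop) (p : M -> Prop) : Prop :=
  exists g, G0 g /\ same_set p (fun X => exists Y, pstd Y /\ X = g *m Y *m invmx g).

(* g0 x g0 x g0 = (p1 x p2 x p3) + diag(g0) *)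
Definition decomp (g0 p1 p2 p3 : M -> Prop) : Prop :=
  forall X1 X2 X3, g0 X1 -> g0 X2 -> g0 X3 ->
    exists Y P1 P2 P3, [/\ g0 Y, p1 P1, p2 P2 & p3 P3] /\
      [/\ X1 = P1 + Y, X2 = P2 + Y & X3 = P3 + Y].

Definition pairwise_distinct (p1 p2 p3 : M -> Prop) : Prop :=
  [/\ ~ same_set p1 p2, ~ same_set p1 p3 & ~ same_set p2 p3].

Definition Prop61 (G0 g0 pstd : M -> Prop) : Prop :=
  (forall p1 p2 p3, minpar G0 pstd p1 -> minpar G0 pstd p2 -> minpar G0 pstd p3 ->
     (decomp g0 p1 p2 p3 <-> pairwise_distinct p1 p2 p3)) /\
  (exists p1 p2 p3, [/\ minpar G0 pstd p1, minpar G0 pstd p2, minpar G0 pstd p3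
                       & decomp g0 p1 p2 p3]).
End Generic.

(* SL(2,F), sl(2,F), and its standard Borel = minimal parabolic (upper triangular),
   used with F = R and F = C = R[i] (sl(2,C) viewed as a real Lie algebra). *)
Definition SL2 (F : fieldType) (g : 'M[F]_2) : Prop := \det g = 1.
Definition sl2 (F : fieldType) (X : 'M[F]_2) : Prop := \tr X = 0.
Definition sl2_pstd (F : fieldType) (X : 'M[F]_2) : Prop :=
  \tr X = 0 /\ X ord_max ord0 = 0.

Definition Jform (R : realType) (n : nat) : 'M[R]_n.+1 :=
  \matrix_(i, j) (if i == j then (if i == ord_max then -1 else 1) else 0).
Definition SOe (R : realType) (n : nat) (g : 'M[R]_n.+1) : Prop :=
  [/\ g^T *m Jform R n *m g = Jform R n, \det g = 1 & 0 < g ord_max ord_max].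
Definition so_n1 (R : realType) (n : nat) (X : 'M[R]_n.+1) : Prop :=
  X^T *m Jform R n + Jform R n *m X = 0.
Definition null_v (R : realType) (n : nat) : 'cV[R]_n.+1 :=
  \col_i (if (i == ord0) || (i == ord_max) then 1 else 0).
(* standard minimal parabolic: stabilizer in so(n,1) of the null line R(e_0+e_n)
   (= m + a + n for the Iwasawa decomposition with a = boosts in the e_0,e_n plane) *)
Definition so_pstd (R : realType) (n : nat) (X : 'M[R]_n.+1) : Prop :=
  so_n1 X /\ exists c : R, X *m null_v R n = c *: null_v R n.

(* Main.v *)
Require Import Defs.
From HB Require Import structures.
From mathcomp Require Import all_boot all_order all_algebra.
From mathcomp Require Import complex.
From mathcomp Require Import reals.
From mathcomp Require Import perm ring.
Set Implicit Arguments. Unset Strict Implicit. Unset Printing Implicit Defensive.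
Import Order.TTheory GRing.Theory Num.Theory.
Local Open Scope ring_scope.


Section Gen.
Variables (F : fieldType) (k : nat).
Notation M := 'M[F]_k.

Lemma minpar_char (pstd p : M -> Prop) g : g \in unitmx ->
  same_set p (fun X => exists Y, pstd Y /\ X = g *m Y *m invmx g) ->
  forall X, p X <-> pstd (invmx g *m X *m g).
Proof.
move=> gu hp X; rewrite hp; split.
  by case=> Y [pY ->]; rewrite !mulmxA mulVmx // mul1mx mulmxKV.
move=> pX; exists (invmx g *m X *m g); split => //.
by rewrite !mulmxA mulmxV // mul1mx mulmxK.
Qed.

Lemma pair_distinct (g0 pstd p q : M -> Prop) g (Z : M) :
  g \in unitmx ->
  same_set p (fun X => exists Y, pstd Y /\ X = g *m Y *m invmx g) ->
  (forall P Q, pstd P -> pstd Q -> pstd (P - Q)) ->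
  g0 (g *m Z *m invmx g) -> ~ pstd Z ->
  (forall X, g0 X -> exists Y P Q, [/\ p P, q Q, X = P + Y & 0 = Q + Y]) ->
  ~ same_set p q.
Proof.
move=> gu hp subp gZ nZ H pq.
have [Y [P [Q [pP qQ eX e0]]]] := H _ gZ.
have pQ : p Q by apply/pq.
have := subp _ _ (proj1 (minpar_char gu hp P) pP) (proj1 (minpar_char gu hp Q) pQ).
have -> : Q = - Y by apply/eqP; rewrite -addr_eq0 -e0.
rewrite -mulmxBl -mulmxBr opprK -eX !mulmxA mulVmx // mul1mx mulmxKV //.
Qed.

Lemma decomp_distinct (G0 g0 pstd : M -> Prop) (Z : M) :
  (forall g, G0 g -> g \in unitmx) ->
  (forall g Y, G0 g -> g0 Y -> g0 (g *m Y *m invmx g)) ->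
  (forall P Q, pstd P -> pstd Q -> pstd (P - Q)) ->
  g0 0 -> g0 Z -> ~ pstd Z ->
  forall p1 p2 p3, minpar G0 pstd p1 -> minpar G0 pstd p2 -> minpar G0 pstd p3 ->
  decomp g0 p1 p2 p3 -> pairwise_distinct p1 p2 p3.
Proof.
move=> unitG conjG subp g00 gZ nZ p1 p2 p3 [g1 [G1 h1]] [g2 [G2 h2]] [g3 [G3 h3]] D.
split.
- apply: (pair_distinct (unitG _ G1) h1 subp (conjG _ _ G1 gZ) nZ).
  move=> X gX; have [Y [P1 [P2 [P3 [[_ q1 q2 q3] [e1 e2 e3]]]]]] := D _ _ _ gX g00 g00.
  by exists Y, P1, P2.
- apply: (pair_distinct (unitG _ G1) h1 subp (conjG _ _ G1 gZ) nZ).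
  move=> X gX; have [Y [P1 [P2 [P3 [[_ q1 q2 q3] [e1 e2 e3]]]]]] := D _ _ _ gX g00 g00.
  by exists Y, P1, P3.
- apply: (pair_distinct (unitG _ G2) h2 subp (conjG _ _ G2 gZ) nZ).
  move=> X gX; have [Y [P1 [P2 [P3 [[_ q1 q2 q3] [e1 e2 e3]]]]]] := D _ _ _ g00 gX g00.
  by exists Y, P2, P3.
Qed.

End Gen.


Section SL2.
Variable F : numFieldType.
Notation M := 'M[F]_2.

Lemma sum2 (G : 'I_2 -> F) : \sum_i G i = G ord0 + G ord_max.
Proof. by rewrite big_ord_recl big_ord1; congr (_ + G _); apply/val_inj. Qed.

Lemma det2 (A : M) : \det A = A ord0 ord0 * A ord_max ord_max - A ord0 ord_max * A ord_max ord0.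
Proof.
rewrite (expand_det_row _ ord0) sum2 /cofactor !det_mx11 !mxE /=.
have -> : lift ord0 (0 : 'I_1) = ord_max :> 'I_2 by apply/val_inj.
have -> : lift ord_max (0 : 'I_1) = ord0 :> 'I_2 by apply/val_inj.
by rewrite expr0 expr1 mul1r mulN1r mulrN.
Qed.

Definition phi (g X : M) :=
  - (g ord0 ord0 * g ord_max ord0) * X ord0 ord0
  - g ord_max ord0 ^+ 2 * X ord0 ord_max
  + g ord0 ord0 ^+ 2 * X ord_max ord0
  + g ord0 ord0 * g ord_max ord0 * X ord_max ord_max.

Lemma unit_det1 (g : M) : \det g = 1 -> g \in unitmx.
Proof. by move=> d; rewrite unitmxE d unitr1. Qed.

Lemma phiE (g X : M) : \det g = 1 -> (invmx g *m X *m g) ord_max ord0 = phi g X.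
Proof.
move=> dg; have gu := unit_det1 dg.
set h := invmx g.
have hg : h *m g = 1%:M by rewrite mulVmx.
have e1 : (h *m g) ord_max ord0 = 0 by rewrite hg mxE.
have e2 : (h *m g) ord_max ord_max = 1 by rewrite hg mxE.
rewrite !mxE !sum2 in e1 e2.
move: dg; rewrite det2 => dg.
set a := g ord0 ord0 in dg e1 e2 *; set b := g ord0 ord_max in dg e1 e2 *.
set c := g ord_max ord0 in dg e1 e2 *; set d := g ord_max ord_max in dg e1 e2 *.
set h10 := h ord_max ord0 in e1 e2 *; set h11 := h ord_max ord_max in e1 e2 *.
have h1 : h10 = - c.
  have H : h10 * (a * d - b * c) + c * (h10 * b + h11 * d) - d * (h10 * a + h11 * c) = 0 by ring.
  by move/eqP: H; rewrite dg e1 e2 mulr1 mulr1 mulr0 subr0 addr_eq0 => /eqP.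
have h2 : h11 = a.
  have H : h11 * (a * d - b * c) - a * (h10 * b + h11 * d) + b * (h10 * a + h11 * c) = 0 by ring.
  by move/eqP: H; rewrite dg e1 e2 mulr1 mulr1 mulr0 addr0 subr_eq0 => /eqP.
rewrite !mxE !sum2 !mxE !sum2 /phi -/a -/b -/c -/d -/h10 -/h11 h1 h2; ring.
Qed.

Lemma sl2_char (g : M) (p : M -> Prop) : \det g = 1 ->
  same_set p (fun X => exists Y, sl2_pstd Y /\ X = g *m Y *m invmx g) ->
  forall X, p X <-> (\tr X = 0 /\ phi g X = 0).
Proof.
move=> dg hp X; rewrite (minpar_char (unit_det1 dg) hp) /sl2_pstd phiE //.
rewrite mxtrace_mulC mulmxA mulmxV ?unit_det1 // mul1mx.
by [].
Qed.

Definition vD (g1 g2 : M) := g1 ord0 ord0 * g2 ord_max ord0 - g2 ord0 ord0 * g1 ord_max ord0.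

Lemma line_nz (g : M) : \det g = 1 -> (g ord0 ord0 != 0) || (g ord_max ord0 != 0).
Proof.
rewrite det2 => dg; case: (eqVneq (g ord0 ord0) 0) => a0 //=; case: (eqVneq (g ord_max ord0) 0) => c0 //=.
by move: dg; rewrite a0 c0 !mul0r mulr0 subr0 => /eqP; rewrite eq_sym oner_eq0.
Qed.

Lemma sl2_same (g1 g2 : M) (p1 p2 : M -> Prop) : \det g1 = 1 -> \det g2 = 1 ->
  (forall X, p1 X <-> (\tr X = 0 /\ phi g1 X = 0)) ->
  (forall X, p2 X <-> (\tr X = 0 /\ phi g2 X = 0)) ->
  vD g1 g2 = 0 -> same_set p1 p2.
Proof.
move=> d1 d2 h1 h2 D.
have [t [t0 [ea ec]]] : exists t, [/\ t != 0, g2 ord0 ord0 = t * g1 ord0 ord0 & g2 ord_max ord0 = t * g1 ord_max ord0].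
  move: D; rewrite /vD => /eqP; rewrite subr_eq0 => /eqP D.
  have := line_nz d1; case: (boolP (g1 ord0 ord0 == 0)) => /= a0 c0.
    exists (g2 ord_max ord0 / g1 ord_max ord0).
    have a2 : g2 ord0 ord0 = 0.
      by move: D; rewrite (eqP a0) mul0r => /esym/eqP; rewrite mulf_eq0 (negbTE c0) orbF => /eqP.
    rewrite (eqP a0) a2 mulr0 divfK //; split => //.
    by have := line_nz d2; rewrite a2 eqxx /= => ?; rewrite mulf_neq0 // invr_eq0.
  exists (g2 ord0 ord0 / g1 ord0 ord0).
  have c2 : g2 ord_max ord0 = g2 ord0 ord0 / g1 ord0 ord0 * g1 ord_max ord0.
    by apply: (mulfI a0); rewrite D; field.
  rewrite divfK // c2; split => //.
  apply/negP => /eqP t0; move: (line_nz d2); rewrite c2 t0 mul0r eqxx orbF.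
  by move: t0 => /eqP; rewrite mulf_eq0 invr_eq0 (negbTE a0) orbF => ->.
move=> X; rewrite h1 h2.
have -> : phi g2 X = t ^+ 2 * phi g1 X by rewrite /phi ea ec; ring.
split=> [[T P]|[T P]]; split => //; first by rewrite P mulr0.
by move/eqP: P; rewrite mulf_eq0 expf_eq0 (negbTE t0) andbF /= => /eqP.
Qed.

Lemma solve3 (a1 c1 a2 c2 a3 c3 r1 r2 r3 : F) :
  a1 * c2 - a2 * c1 != 0 -> a1 * c3 - a3 * c1 != 0 -> a2 * c3 - a3 * c2 != 0 ->
  exists y z w, [/\ - (a1 * c1) * y - c1 ^+ 2 * z + a1 ^+ 2 * w + a1 * c1 * (- y) = r1,
                    - (a2 * c2) * y - c2 ^+ 2 * z + a2 ^+ 2 * w + a2 * c2 * (- y) = r2 &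
                    - (a3 * c3) * y - c3 ^+ 2 * z + a3 ^+ 2 * w + a3 * c3 * (- y) = r3].
Proof.
move=> D12 D13 D23.
have two : (2 : F) != 0 by rewrite pnatr_eq0.
set N1 := -2 * (a1 * c2 - a2 * c1) * (a1 * c3 - a3 * c1).
set N2 := 2 * (a1 * c2 - a2 * c1) * (a2 * c3 - a3 * c2).
set N3 := -2 * (a1 * c3 - a3 * c1) * (a2 * c3 - a3 * c2).
exists (r1 / N1 * (- (a2 * c3 + a3 * c2)) + r2 / N2 * (- (a1 * c3 + a3 * c1)) + r3 / N3 * (- (a1 * c2 + a2 * c1))).
exists (r1 / N1 * (2 * a2 * a3) + r2 / N2 * (2 * a1 * a3) + r3 / N3 * (2 * a1 * a2)).
exists (r1 / N1 * (-2 * c2 * c3) + r2 / N2 * (-2 * c1 * c3) + r3 / N3 * (-2 * c1 * c2)).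
rewrite /N1 /N2 /N3; split; field; by rewrite D12 D13 D23.
Qed.
End SL2.

Section SL2b.
Variable F : numFieldType.
Notation M := 'M[F]_2.

Lemma phiB (g X Y : M) : phi g (X - Y) = phi g X - phi g Y.
Proof. by rewrite /phi !mxE; ring. Qed.

Lemma sl2_forward (g1 g2 g3 : M) (p1 p2 p3 : M -> Prop) :
  (forall X, p1 X <-> (\tr X = 0 /\ phi g1 X = 0)) ->
  (forall X, p2 X <-> (\tr X = 0 /\ phi g2 X = 0)) ->
  (forall X, p3 X <-> (\tr X = 0 /\ phi g3 X = 0)) ->
  vD g1 g2 != 0 -> vD g1 g3 != 0 -> vD g2 g3 != 0 -> decomp (@sl2 F) p1 p2 p3.
Proof.
move=> h1 h2 h3 D12 D13 D23 X1 X2 X3 t1 t2 t3.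
have [y [z [w [e1 e2 e3]]]] := solve3 (phi g1 X1) (phi g2 X2) (phi g3 X3) D12 D13 D23.
pose Y : M := \matrix_(i, j) (if i == ord0 then (if j == ord0 then y else z)
                             else (if j == ord0 then w else - y)).
have tY : \tr Y = 0 by rewrite /mxtrace sum2 !mxE /= subrr.
have phY g : phi g Y = - (g ord0 ord0 * g ord_max ord0) * y - g ord_max ord0 ^+ 2 * z
   + g ord0 ord0 ^+ 2 * w + g ord0 ord0 * g ord_max ord0 * (- y) by rewrite /phi !mxE.
have tB X : \tr (X - Y) = \tr X by rewrite linearB /= tY subr0.
exists Y, (X1 - Y), (X2 - Y), (X3 - Y); split; last by split; rewrite subrK.
split => //.
- by apply/h1; rewrite tB phiB phY e1 subrr.
- by apply/h2; rewrite tB phiB phY e2 subrr.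
- by apply/h3; rewrite tB phiB phY e3 subrr.
Qed.
End SL2b.

Section SL2c.
Variable F : numFieldType.
Notation M := 'M[F]_2.

Lemma sl2_prop61 : Prop61 (@SL2 F) (@sl2 F) (@sl2_pstd F).
Proof.
have conj_sl2 (g Y : M) : SL2 g -> sl2 Y -> sl2 (g *m Y *m invmx g).
  rewrite /SL2 /sl2 => dg tY.
  by rewrite mxtrace_mulC mulmxA mulVmx ?unit_det1 // mul1mx.
have Z_sl2 : sl2 (delta_mx ord_max ord0 : M).
  by rewrite /sl2 /mxtrace sum2 !mxE /= addr0.
have Z_np : ~ sl2_pstd (delta_mx ord_max ord0 : M).
  by rewrite /sl2_pstd mxE /= => -[_ /eqP]; rewrite oner_eq0.
have subp (P Q : M) : sl2_pstd P -> sl2_pstd Q -> sl2_pstd (P - Q).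
  rewrite /sl2_pstd => -[tP eP] [tQ eQ]; split; first by rewrite linearB /= tP tQ subrr.
  by rewrite !mxE eP eQ subrr.
split.
  move=> p1 p2 p3 m1 m2 m3; split.
    apply: (decomp_distinct _ conj_sl2 subp _ Z_sl2 Z_np) => //.
    - by move=> g; apply: unit_det1.
    - by rewrite /sl2 /mxtrace big1 // => i _; rewrite mxE.
  move: m1 m2 m3 => [g1 [G1 H1]] [g2 [G2 H2]] [g3 [G3 H3]] [n12 n13 n23].
  have c1 := sl2_char G1 H1; have c2 := sl2_char G2 H2; have c3 := sl2_char G3 H3.
  apply: (sl2_forward c1 c2 c3); apply/eqP => D.
  - exact: n12 (sl2_same G1 G2 c1 c2 D).
  - exact: n13 (sl2_same G1 G3 c1 c3 D).
  - exact: n23 (sl2_same G2 G3 c2 c3 D).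
pose g1 : M := 1%:M.
pose g2 : M := \matrix_(i, j) (if i == j then 0 else if i == ord0 then -1 else 1).
pose g3 : M := \matrix_(i, j) (if (i == ord0) && (j == ord_max) then 0 else 1).
have G1 : SL2 g1 by rewrite /SL2 det1.
have G2 : SL2 g2 by rewrite /SL2 det2 !mxE /=; ring.
have G3 : SL2 g3 by rewrite /SL2 det2 !mxE /=; ring.
pose P g := fun X : M => exists Y, sl2_pstd Y /\ X = g *m Y *m invmx g.
have mp g : SL2 g -> minpar (@SL2 F) (@sl2_pstd F) (P g) by move=> Gg; exists g.
exists (P g1), (P g2), (P g3); split; try exact: mp.
have c1 := sl2_char G1 (fun X => iff_refl _); have c2 := sl2_char G2 (fun X => iff_refl _).
have c3 := sl2_char G3 (fun X => iff_refl _).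
apply: (sl2_forward c1 c2 c3); rewrite /vD /g1 /g2 /g3 !mxE /=.
- by rewrite mulr1 mulr0 subr0 oner_eq0.
- by rewrite mulr1 mulr0 subr0 oner_eq0.
- by rewrite mul0r mulr1 sub0r oppr_eq0 oner_eq0.
Qed.
End SL2c.


Section SO.
Variables (R : realType) (n : nat).
Notation M := 'M[R]_n.+1.
Notation V := 'cV[R]_n.+1.
Notation J := (Jform R n).

Definition sgn (i : 'I_n.+1) : R := if i == ord_max then -1 else 1.

Lemma JE : J = diag_mx (\row_i sgn i).
Proof.
apply/matrixP => i j; rewrite !mxE /sgn.
by case: (i == j); rewrite ?mulr1n ?mulr0n.
Qed.

Lemma J_tr : J^T = J.
Proof. by rewrite JE tr_diag_mx. Qed.

Lemma JJ : J *m J = 1%:M.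
Proof.
rewrite JE mulmx_diag; apply/matrixP => i j; rewrite !mxE /sgn.
by case: (i == ord_max); rewrite ?mulr1 ?mulrNN ?mulr1.
Qed.

Definition Bf (x y : V) : R := (x^T *m J *m y) 0 0.

Lemma Bsym x y : Bf x y = Bf y x.
Proof.
rewrite /Bf; have -> : (x^T *m J *m y) 0 0 = ((x^T *m J *m y)^T) 0 0 by rewrite [RHS]mxE.
by rewrite !trmx_mul trmxK J_tr mulmxA.
Qed.

Lemma Bsum x y : Bf x y = \sum_i x i 0 * y i 0 * sgn i.
Proof.
rewrite /Bf JE mul_mx_diag mxE; apply: eq_bigr => i _; rewrite !mxE; ring.
Qed.

Definition Wm (a b : V) : M := a *m (b^T *m J) - b *m (a^T *m J).

Lemma Wmul a b x : Wm a b *m x = Bf b x *: a - Bf a x *: b.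
Proof.
rewrite /Wm mulmxBl -!mulmxA /Bf.
by rewrite [b^T *m (J *m x)]mx11_scalar [a^T *m (J *m x)]mx11_scalar !mul_mx_scalar !mulmxA.
Qed.

Lemma so_E (X : M) : so_n1 X <-> X^T *m J + J *m X = 0.
Proof. by []. Qed.

Lemma so_W a b : so_n1 (Wm a b).
Proof.
rewrite /so_n1 /Wm linearB /= !trmx_mul !trmxK J_tr mulmxBl mulmxBr.
rewrite !mulmxA; set A := J *m b *m a^T *m J; set B := J *m a *m b^T *m J.
by rewrite addrA subrK subrr.
Qed.

Lemma so_add (X Y : M) : so_n1 X -> so_n1 Y -> so_n1 (X + Y).
Proof.
rewrite /so_n1 linearD /= mulmxDl mulmxDr => hX hY.
by rewrite addrACA hX hY addr0.
Qed.

Lemma so_scale c (X : M) : so_n1 X -> so_n1 (c *: X).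
Proof.
rewrite /so_n1 => hX; rewrite linearZ /= -scalemxAl -scalemxAr -scalerDr hX.
by rewrite scaler0.
Qed.

Lemma so_opp (X : M) : so_n1 X -> so_n1 (- X).
Proof. by move=> h; rewrite -scaleN1r; apply: so_scale. Qed.

Lemma so_sub (X Y : M) : so_n1 X -> so_n1 Y -> so_n1 (X - Y).
Proof. by move=> hX hY; apply: so_add => //; apply: so_opp. Qed.

Lemma so_0 : so_n1 (0 : M).
Proof. by rewrite /so_n1 trmx0 mul0mx mulmx0 addr0. Qed.


Lemma core (v1 v2 v3 w : V) : Bf v1 v1 = 0 -> Bf v2 v2 = 0 -> Bf v3 v3 = 0 ->
  Bf w v1 = 0 -> Bf v1 v2 != 0 -> Bf v1 v3 != 0 ->
  exists Y, [/\ so_n1 Y, exists s, Y *m v1 = w + s *: v1,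
              exists s, Y *m v2 = s *: v2 & exists s, Y *m v3 = s *: v3].
Proof.
move=> n1 n2 n3 m1 b12 b13.
have two : (2 : R) != 0 by rewrite pnatr_eq0.
pose x := (2 * Bf v1 v2)^-1.
pose y := (2 * Bf v1 v3)^-1.
pose z := - Bf v2 v3 / (2 * Bf v1 v2 * Bf v1 v3).
pose k := - (2 * Bf v1 v2 * Bf v1 v3)^-1.
pose Y := z *: Wm w v1 + x *: Wm w v2 + y *: Wm w v3
          + (k * Bf w v2) *: Wm v1 v3 + (k * Bf w v3) *: Wm v1 v2.
exists Y; split.
- by rewrite /Y; repeat apply: so_add; apply: so_scale; apply: so_W.
- exists (k * (Bf w v2 * Bf v1 v3 + Bf w v3 * Bf v1 v2)).
  rewrite /Y !mulmxDl -!scalemxAl !Wmul; apply/matrixP => i j; rewrite !mxE.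
  rewrite (Bsym v2 v1) (Bsym v3 v1) n1 m1 /x /y /z /k; field.
  by rewrite b12 b13.
- exists (- x * Bf w v2 - k * Bf w v3 * Bf v1 v2).
  rewrite /Y !mulmxDl -!scalemxAl !Wmul; apply/matrixP => i j; rewrite !mxE.
  rewrite (Bsym v3 v2) n2 /x /y /z /k; field.
  by rewrite b12 b13.
- exists (- y * Bf w v3 - k * Bf w v2 * Bf v1 v3).
  rewrite /Y !mulmxDl -!scalemxAl !Wmul; apply/matrixP => i j; rewrite !mxE.
  rewrite n3 /x /y /z /k; field.
  by rewrite b12 b13.
Qed.

Lemma so_skew (X : M) v : so_n1 X -> Bf (X *m v) v = 0.
Proof.
rewrite /so_n1 => hX.
have h : Bf (X *m v) v = - Bf v (X *m v).
  have hX' : X^T *m J = - (J *m X) by apply/eqP; rewrite -addr_eq0 hX.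
  by rewrite /Bf trmx_mul -(mulmxA v^T) hX' mulmxN mulNmx mxE !mulmxA.
have : Bf (X *m v) v *+ 2 = 0 by rewrite mulr2n {1}h Bsym addNr.
by move/eqP; rewrite mulrn_eq0 /= => /eqP.
Qed.

Lemma so_forward (v1 v2 v3 : V) (p1 p2 p3 : M -> Prop) :
  Bf v1 v1 = 0 -> Bf v2 v2 = 0 -> Bf v3 v3 = 0 ->
  Bf v1 v2 != 0 -> Bf v1 v3 != 0 -> Bf v2 v3 != 0 ->
  (forall X, p1 X <-> so_n1 X /\ exists c, X *m v1 = c *: v1) ->
  (forall X, p2 X <-> so_n1 X /\ exists c, X *m v2 = c *: v2) ->
  (forall X, p3 X <-> so_n1 X /\ exists c, X *m v3 = c *: v3) ->
  decomp (@so_n1 R n) p1 p2 p3.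
Proof.
move=> n1 n2 n3 b12 b13 b23 h1 h2 h3 X1 X2 X3 s1 s2 s3.
have [Y1 [sY1 [a1 e11] [a2 e12] [a3 e13]]] := core n1 n2 n3 (so_skew v1 s1) b12 b13.
have b21 : Bf v2 v1 != 0 by rewrite Bsym.
have b31 : Bf v3 v1 != 0 by rewrite Bsym.
have b32 : Bf v3 v2 != 0 by rewrite Bsym.
have [Y2 [sY2 [c2 e22] [c1 e21] [c3 e23]]] := core n2 n1 n3 (so_skew v2 s2) b21 b23.
have [Y3 [sY3 [d3 e33] [d1 e31] [d2 e32]]] := core n3 n1 n2 (so_skew v3 s3) b31 b32.
have sY : so_n1 (Y1 + Y2 + Y3) by repeat apply: so_add.
exists (Y1 + Y2 + Y3), (X1 - (Y1 + Y2 + Y3)), (X2 - (Y1 + Y2 + Y3)), (X3 - (Y1 + Y2 + Y3)).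
split; last by split; rewrite subrK.
split => //.
- apply/h1; split; first exact: so_sub.
  exists (- (a1 + c1 + d1)); rewrite mulmxBl !mulmxDl e11 e21 e31.
  by apply/matrixP => i j; rewrite !mxE; ring.
- apply/h2; split; first exact: so_sub.
  exists (- (a2 + c2 + d2)); rewrite mulmxBl !mulmxDl e12 e22 e32.
  by apply/matrixP => i j; rewrite !mxE; ring.
- apply/h3; split; first exact: so_sub.
  exists (- (a3 + c3 + d3)); rewrite mulmxBl !mulmxDl e13 e23 e33.
  by apply/matrixP => i j; rewrite !mxE; ring.
Qed.

Lemma sumsq0 (u : V) : \sum_i u i 0 * u i 0 * sgn i = 0 -> u ord_max 0 = 0 -> u = 0.
Proof.
move=> S uN; rewrite (bigD1 ord_max) //= uN !mul0r add0r in S.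
have S' : \sum_(i | i != ord_max) u i 0 ^+ 2 = 0.
  rewrite -[RHS]S; apply: eq_bigr => i /negbTE iN; rewrite /sgn iN mulr1 expr2 //.
apply/matrixP => i j; rewrite (ord1 j) mxE.
case: (eqVneq i ord_max) => [->|iN] //.
have := psumr_eq0P (fun i _ => sqr_ge0 (u i 0)) S' iN.
by move/eqP; rewrite sqrf_eq0 => /eqP.
Qed.

Lemma lorentz (x y : V) : Bf x x = 0 -> Bf y y = 0 -> Bf x y = 0 -> x != 0 ->
  exists t, y = t *: x.
Proof.
move=> nx ny nxy x0.
pose a := y ord_max 0; pose b := x ord_max 0.
pose z := a *: x - b *: y.
have Ez : \sum_i z i 0 * z i 0 * sgn i =
   a ^+ 2 * Bf x x - 2 * a * b * Bf x y + b ^+ 2 * Bf y y.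
  rewrite !Bsum !mulr_sumr -sumrB -big_split /=; apply: eq_bigr => i _.
  by rewrite /z !mxE; ring.
rewrite nx ny nxy !mulr0 subr0 addr0 in Ez.
have z0 : z = 0 by apply: sumsq0 => //; rewrite /z !mxE /a /b mulrC subrr.
have b0 : b != 0.
  apply: contra x0 => /eqP b0; apply/eqP; apply: sumsq0 => //.
  by rewrite -Bsum.
exists (a / b); apply/matrixP => i j; rewrite mxE.
have := congr1 (fun m : V => m i j) z0; rewrite /z !mxE => /eqP.
rewrite subr_eq0 => /eqP e; apply: (mulfI b0); rewrite -e; field.
by [].
Qed.

Definition isom (g : M) := g^T *m J *m g = J.

Lemma isom_left (g : M) : isom g -> J *m g^T *m J *m g = 1%:M.
Proof. by move=> hg; rewrite -!mulmxA (mulmxA g^T) hg JJ. Qed.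

Lemma isom_inv (g : M) : isom g -> g \in unitmx -> invmx g = J *m g^T *m J.
Proof.
move=> hg gu; have L := mulmx1C (isom_left hg).
by rewrite -[invmx g]mulmx1 -L mulmxA mulVmx // mul1mx.
Qed.

Lemma isom_gJg (g : M) : isom g -> g *m J *m g^T = J.
Proof.
move=> hg; have L := mulmx1C (isom_left hg).
have e : g *m J *m g^T *m J = 1%:M by rewrite -L !mulmxA.
by rewrite -[LHS]mulmx1 -JJ mulmxA e mul1mx.
Qed.

Lemma isom_invmx (g : M) : isom g -> g \in unitmx -> isom (invmx g).
Proof.
move=> hg gu; rewrite /isom isom_inv // !trmx_mul trmxK J_tr.
rewrite !mulmxA -!(mulmxA _ J J) !JJ !mulmx1.
by rewrite -(mulmxA J g) -(mulmxA J) isom_gJg // JJ mul1mx.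
Qed.

Lemma so_conj_id (g X : M) : isom g -> g \in unitmx ->
  (invmx g *m X *m g)^T *m J + J *m (invmx g *m X *m g) = g^T *m (X^T *m J + J *m X) *m g.
Proof.
move=> hg gu; rewrite isom_inv // !trmx_mul !trmxK J_tr mulmxDr mulmxDl.
by rewrite !mulmxA -!(mulmxA _ J J) !JJ !mulmx1 mul1mx.
Qed.

Lemma so_conj_iff (g X : M) : isom g -> g \in unitmx ->
  so_n1 (invmx g *m X *m g) <-> so_n1 X.
Proof.
move=> hg gu; rewrite /so_n1 so_conj_id //; split => [h|->]; last by rewrite mulmx0 mul0mx.
have gtu : g^T \in unitmx by rewrite unitmx_tr.
set A := X^T *m J + J *m X in h *.
have -> : A = invmx g^T *m (g^T *m A *m g) *m invmx g by rewrite !mulmxA mulVmx // mul1mx mulmxK.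
by rewrite h mulmx0 mul0mx.
Qed.

Lemma SOe_isom (g : M) : SOe g -> isom g.
Proof. by case. Qed.

Lemma SOe_unit (g : M) : SOe g -> g \in unitmx.
Proof. by case=> _ d _; rewrite unitmxE d unitr1. Qed.

Lemma so_char (g : M) (p : M -> Prop) : SOe g ->
  same_set p (fun X => exists Y, so_pstd Y /\ X = g *m Y *m invmx g) ->
  forall X, p X <-> so_n1 X /\ exists c, X *m (g *m null_v R n) = c *: (g *m null_v R n).
Proof.
move=> Gg hp X; have gu := SOe_unit Gg; have hg := SOe_isom Gg.
rewrite (minpar_char gu hp) /so_pstd so_conj_iff //.
split=> -[sX [c e]]; split => //; exists c.
  by rewrite -[X *m _]mul1mx -(mulmxV gu) -!mulmxA (mulmxA _ X) (mulmxA _ _ (null_v R n)) e scalemxAr.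
by rewrite -!mulmxA e -scalemxAr mulmxA mulVmx // mul1mx.
Qed.

Notation e := (null_v R n).

Lemma ord0_max : (0 < n)%N -> ord0 != ord_max :> 'I_n.+1.
Proof. by move=> n0; apply/eqP => /(congr1 val) /= h; rewrite -h in n0. Qed.

Lemma e_null : (0 < n)%N -> Bf e e = 0.
Proof.
move=> n0; rewrite Bsum (bigD1 ord0) //= (bigD1 ord_max) /=; last by rewrite eq_sym ord0_max.
rewrite big1 => [|i /andP [i0 iN]]; last by rewrite !mxE (negbTE i0) (negbTE iN) mul0r mul0r.
by rewrite !mxE /sgn !eqxx /= (negbTE (ord0_max n0)) orbT !mul1r addr0 addrN.
Qed.

Lemma gv_null (g : M) : isom g -> Bf (g *m e) (g *m e) = Bf e e.
Proof.
move=> hg; rewrite /Bf.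
have -> : (g *m e)^T *m J *m (g *m e) = e^T *m (g^T *m J *m g) *m e by rewrite trmx_mul !mulmxA.
by rewrite hg.
Qed.

Lemma e_nz : e != 0.
Proof. by apply/eqP => /matrixP /(_ ord0 0); rewrite !mxE eqxx /= => /eqP; rewrite oner_eq0. Qed.

Lemma gv_nz (g : M) : g \in unitmx -> g *m e != 0.
Proof.
move=> gu; apply: contra e_nz => /eqP ge; apply/eqP.
by rewrite -[e]mul1mx -(mulVmx gu) -mulmxA ge mulmx0.
Qed.

Lemma line_same (X : M) (v w : V) t : w != 0 -> w = t *: v ->
  (exists c, X *m w = c *: w) <-> (exists c, X *m v = c *: v).
Proof.
move=> w0 ew.
have t0 : t != 0 by apply: contra w0 => /eqP t0; rewrite ew t0 scale0r.
split=> -[c hc]; exists c.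
  apply/matrixP => i j; have := congr1 (fun m : V => m i j) hc.
  rewrite ew -scalemxAr !mxE => h; apply: (mulfI t0); rewrite h; ring.
by rewrite ew -scalemxAr hc !scalerA mulrC.
Qed.

Lemma B_nz (g1 g2 : M) (p1 p2 : M -> Prop) : (0 < n)%N -> SOe g1 -> SOe g2 ->
  (forall X, p1 X <-> so_n1 X /\ exists c, X *m (g1 *m e) = c *: (g1 *m e)) ->
  (forall X, p2 X <-> so_n1 X /\ exists c, X *m (g2 *m e) = c *: (g2 *m e)) ->
  ~ same_set p1 p2 -> Bf (g1 *m e) (g2 *m e) != 0.
Proof.
move=> n0 G1 G2 h1 h2 nd; apply/eqP => B0; apply: nd.
have N1 : Bf (g1 *m e) (g1 *m e) = 0 by rewrite gv_null ?e_null //; apply: SOe_isom.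
have N2 : Bf (g2 *m e) (g2 *m e) = 0 by rewrite gv_null ?e_null //; apply: SOe_isom.
have [t et] := lorentz N1 N2 B0 (gv_nz (SOe_unit G1)).
move=> X; rewrite h1 h2 (line_same X (gv_nz (SOe_unit G2)) et).
by [].
Qed.

Lemma sum_delta (a : 'I_n.+1) (G : 'I_n.+1 -> R) : \sum_l (a == l)%:R * G l = G a.
Proof.
rewrite (bigD1 a) //= eqxx mul1r big1 ?addr0 // => l /negbTE.
by rewrite eq_sym => ->; rewrite mul0r.
Qed.

Section N2.
Hypothesis hn : (2 <= n)%N.
Let n0 : (0 < n)%N. Proof. by apply: leq_trans hn. Qed.
Definition i1 : 'I_n.+1 := inord 1.
Lemma i1_val : val i1 = 1%N.
Proof. by rewrite /i1 /= inordK // ltnS; apply: leq_trans hn. Qed.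
Lemma i1_0 : i1 != ord0. Proof. by apply/eqP => /(congr1 val); rewrite i1_val. Qed.
Lemma i1_N : i1 != ord_max.
Proof. by apply/eqP => /(congr1 val); rewrite i1_val /= => h; move: hn; rewrite -h. Qed.

Definition e0 : V := \col_i (i == ord0)%:R.
Definition e1 : V := \col_i (i == i1)%:R.

Lemma e_i1 : e i1 0 = 0.
Proof. by rewrite mxE (negbTE i1_0) (negbTE i1_N). Qed.

Lemma Z_e : Wm e1 e0 *m e = e1.
Proof.
have B0 : Bf e0 e = 1.
  rewrite Bsum (bigD1 ord0) //= big1 => [|i /negbTE i0]; last by rewrite !mxE i0 !mul0r.
  by rewrite !mxE /sgn eqxx /= (negbTE (ord0_max n0)) !mul1r addr0.
have B1 : Bf e1 e = 0.
  rewrite Bsum big1 // => i _; rewrite !mxE; case: eqVneq => [->|]; last by rewrite !mul0r.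
  by rewrite (negbTE i1_0) (negbTE i1_N) mulr0 mul0r.
by rewrite Wmul B0 B1 scale1r scale0r subr0.
Qed.

Lemma Z_so : so_n1 (Wm e1 e0). Proof. exact: so_W. Qed.

Lemma Z_np : ~ so_pstd (Wm e1 e0).
Proof.
case=> _ [c]; rewrite Z_e => /matrixP /(_ i1 0); rewrite [LHS]mxE [RHS]mxE eqxx e_i1 mulr0.
by move/eqP; rewrite oner_eq0.
Qed.


Definition sig : {perm 'I_n.+1} := tperm ord0 i1.
Definition Pm : M := perm_mx sig.
Definition dD : 'rV[R]_n.+1 := \row_i (if i == i1 then -1 else 1).
Definition Dm : M := diag_mx dD.
Definition Rm : M := Pm *m Dm.

Lemma Pm_tr : Pm^T = Pm.
Proof. by rewrite /Pm tr_perm_mx tpermV. Qed.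
Lemma Pm_l k (A : 'M[R]_(n.+1, k)) : Pm *m A = row_perm sig A.
Proof. by rewrite row_permE. Qed.
Lemma Pm_r (A : M) : A *m Pm = col_perm sig A.
Proof. by rewrite col_permE tpermV. Qed.

Lemma sgn_sig i : sgn (sig i) = sgn i.
Proof.
rewrite /sig; case: (eqVneq i ord0) => [->|i0]; first by rewrite tpermL /sgn (negbTE i1_N) (negbTE (ord0_max n0)).
case: (eqVneq i i1) => [->|ii1]; first by rewrite tpermR /sgn (negbTE i1_N) (negbTE (ord0_max n0)).
by rewrite tpermD // eq_sym.
Qed.

Lemma isom_mul (a b : M) : isom a -> isom b -> isom (a *m b).
Proof. by move=> ha hb; rewrite /isom trmx_mul !mulmxA -(mulmxA b^T) -(mulmxA b^T) ha. Qed.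

Lemma isom_Pm : isom Pm.
Proof.
rewrite /isom Pm_tr Pm_l Pm_r; apply/matrixP => i j; rewrite !mxE.
by rewrite (inj_eq perm_inj); have := sgn_sig i; rewrite /sgn => ->.
Qed.

Lemma isom_Dm : isom Dm.
Proof.
rewrite /isom /Dm tr_diag_mx JE !mulmx_diag; congr diag_mx; apply/rowP => i; rewrite !mxE.
by case: (i == i1); ring.
Qed.

Lemma SOe_Rm : SOe Rm.
Proof.
split; first exact: isom_mul isom_Pm isom_Dm.
  rewrite /Rm det_mulmx det_perm odd_tperm eq_sym i1_0 det_diag (bigD1 i1) //= big1.
    by rewrite !mxE eqxx expr1; ring.
  by move=> i /negbTE ii; rewrite mxE ii.
rewrite /Rm mul_mx_diag !mxE /sig tpermD; last by rewrite i1_N.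
  by rewrite eqxx [ord_max == i1]eq_sym (negbTE i1_N) mul1r ltr01.
exact: ord0_max n0.
Qed.

Lemma SOe_Rmt : SOe Rm^T.
Proof.
have [hR dR pR] := SOe_Rm; split.
- by rewrite /isom trmxK isom_gJg.
- by rewrite det_tr.
- by rewrite mxE.
Qed.

Lemma SOe_1 : SOe (1%:M : M).
Proof.
split; first by rewrite /isom trmx1 mulmx1 mul1mx.
  by rewrite det1.
by rewrite mxE eqxx ltr01.
Qed.

Lemma De : Dm *m e = e.
Proof.
rewrite /Dm mul_diag_mx; apply/matrixP => i j; rewrite !mxE.
case: eqVneq => [->|]; last by rewrite mul1r.
by rewrite (negbTE i1_0) (negbTE i1_N) mulr0.
Qed.

Lemma v2E i : (Rm *m e) i 0 = e (sig i) 0.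
Proof. by rewrite /Rm -mulmxA De Pm_l mxE. Qed.

Lemma v3E i : (Rm^T *m e) i 0 = dD 0 i * e (sig i) 0.
Proof. by rewrite /Rm trmx_mul Pm_tr /Dm tr_diag_mx -mulmxA Pm_l mul_diag_mx !mxE. Qed.

Lemma sig_i1 : sig i1 = ord0. Proof. by rewrite /sig tpermR. Qed.
Lemma sig_N : sig ord_max = ord_max.
Proof. by rewrite /sig tpermD // ?(ord0_max n0) // i1_N. Qed.


Lemma gnull (g : M) : SOe g -> Bf (g *m e) (g *m e) = 0.
Proof. by move=> G; rewrite gv_null ?e_null //; apply: SOe_isom. Qed.

Lemma so_prop61 : Prop61 (@SOe R n) (@so_n1 R n) (@so_pstd R n).
Proof.
have conjG (g Y : M) : SOe g -> so_n1 Y -> so_n1 (g *m Y *m invmx g).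
  move=> G sY; have gu := SOe_unit G; have hg := SOe_isom G.
  have giu : invmx g \in unitmx by rewrite unitmx_inv.
  have := @so_conj_iff _ Y (isom_invmx hg gu) giu.
  by rewrite invmxK => ->.
have subp (P Q : M) : so_pstd P -> so_pstd Q -> so_pstd (P - Q).
  move=> [sP [a eP]] [sQ [b eQ]]; split; first exact: so_sub.
  by exists (a - b); rewrite mulmxBl eP eQ scalerBl.
split.
  move=> p1 p2 p3 m1 m2 m3; split.
    apply: (decomp_distinct _ conjG subp so_0 (Z_so) (Z_np)) => //.
    by move=> g; apply: SOe_unit.
  move: m1 m2 m3 => [g1 [G1 H1]] [g2 [G2 H2]] [g3 [G3 H3]] [n12 n13 n23].
  have c1 := so_char G1 H1; have c2 := so_char G2 H2; have c3 := so_char G3 H3.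
  apply: (so_forward (gnull G1) (gnull G2) (gnull G3) _ _ _ c1 c2 c3).
  - exact: B_nz n0 G1 G2 c1 c2 n12.
  - exact: B_nz n0 G1 G3 c1 c3 n13.
  - exact: B_nz n0 G2 G3 c2 c3 n23.
pose P g := fun X : M => exists Y, so_pstd Y /\ X = g *m Y *m invmx g.
have mp g : SOe g -> minpar (@SOe R n) (@so_pstd R n) (P g) by move=> Gg; exists g.
exists (P 1%:M), (P Rm), (P Rm^T); split; try (apply: mp; first [exact: SOe_1 | exact: SOe_Rm | exact: SOe_Rmt]).
have c1 := so_char SOe_1 (fun X => iff_refl (P 1%:M X)).
have c2 := so_char SOe_Rm (fun X => iff_refl (P Rm X)).
have c3 := so_char SOe_Rmt (fun X => iff_refl (P Rm^T X)).
apply: (so_forward (gnull SOe_1) (gnull SOe_Rm) (gnull SOe_Rmt) _ _ _ c1 c2 c3).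
- apply/eqP => B0; have [t et] := lorentz (gnull SOe_1) (gnull SOe_Rm) B0 (gv_nz (SOe_unit SOe_1)).
  have := congr1 (fun m : V => m i1 0) et; rewrite /= v2E sig_i1 mul1mx.
  have -> : (t *: e) i1 0 = 0 by rewrite mxE e_i1 mulr0.
  by rewrite mxE eqxx /= => /eqP; rewrite oner_eq0.
- apply/eqP => B0; have [t et] := lorentz (gnull SOe_1) (gnull SOe_Rmt) B0 (gv_nz (SOe_unit SOe_1)).
  have := congr1 (fun m : V => m i1 0) et; rewrite /= v3E sig_i1 mul1mx.
  have -> : (t *: e) i1 0 = 0 by rewrite mxE e_i1 mulr0.
  by rewrite !mxE !eqxx /= mulr1 => /eqP; rewrite oppr_eq0 oner_eq0.
- apply/eqP => B0; have [t et] := lorentz (gnull SOe_Rm) (gnull SOe_Rmt) B0 (gv_nz (SOe_unit SOe_Rm)).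
  have h1 := congr1 (fun m : V => m i1 0) et; have h2 := congr1 (fun m : V => m ord_max 0) et.
  have w i : (t *: (Rm *m e)) i 0 = t * e (sig i) 0 by rewrite mxE v2E.
  move: h1 h2; rewrite /= !v3E !w sig_i1 sig_N.
  rewrite !mxE !eqxx /= ?orbT ?(negbTE i1_N) ?mulr1 ?mul1r => h1 h2.
  move: h1 h2; rewrite [ord_max == i1]eq_sym (negbTE i1_N) ?mulr1 => h1 h2.
  have : (2 : R) == 0 by rewrite -[2]/(1 + 1) {1}h2 -h1 addNr.
  by rewrite pnatr_eq0.
Qed.

End N2.
End SO.


Theorem proposition6p1 (R : realType) :
  Prop61 (@SL2 R) (@sl2 R) (@sl2_pstd R) /\
  Prop61 (@SL2 R[i]) (@sl2 R[i]) (@sl2_pstd R[i]) /\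
  (forall n : nat, (2 <= n)%N -> Prop61 (@SOe R n) (@so_n1 R n) (@so_pstd R n)).
Proof.
split; first exact: sl2_prop61.
split; first exact: sl2_prop61.
by move=> n hn; apply: so_prop61.
Qed.
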